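(* Let $m\geq 3$. Let $\pi\in S(\mathbb{Z}_m)$ and $\pi_x\in S(\mathbb{Z}_2)$ for each $x\in\mathbb{Z}_m$, and define $\sigma\in S(\mathbb{Z}_m\times\mathbb{Z}_2)$ by $\sigma(x,y)=(\pi(x),\pi_x(y))$. Let $c\in S(\mathbb{Z}_m\times\mathbb{Z}_2)$ be given by $c(x,y)=(x+1,y)$ if $x\neq m-1$ and $c(x,y)=(x+1,y+1)$ if $x=m-1$. Then there is an integer $k$ such that $\sigma c^k$ has at least $4$ cycles; equivalently, $\min_k t(\sigma c^k)\leq 2m-4$, where $t(\tau)=2m-\mathrm{cyc}(\tau)$.
   Context: $S(X)$ denotes the set of bijections of a finite set $X$; $\mathrm{cyc}(\tau)$ is the number of cycles (including fixed points) of $\tau$. Under the bijection $\mathbb{Z}_{2m}\to\mathbb{Z}_m\times\mathbb{Z}_2$, $r+mt\mapsto(r,t)$ ($0\le r<m$, $t\in\{0,1\}$), $c$ corresponds to $z\mapsto z+1$, so $\{\sigma c^k\}$ corresponds to the circular class $[\sigma]$ and the claim says $t([\sigma])\leq 2m-4$. *)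

(* Defs.v *)
From mathcomp Require Import all_boot all_fingroup all_algebra.
Set Implicit Arguments. Unset Strict Implicit. Unset Printing Implicit Defensive.

Definition cyc (T : finType) (s : {perm T}) : nat := #|porbits s|.

Definition perm_zpow (T : finType) (s : {perm T}) (k : int) : {perm T} :=
  match k with
  | Posz n => (s ^+ n)%g
  | Negz n => ((s ^+ n.+1)^-1)%g
  end.

(* Composition as functions: (comp_perm s t) z = s (t z), i.e. "s t" in the
   paper's notation (in MathComp, t * s applies t first). *)
Definition comp_perm (T : finType) (s t : {perm T}) : {perm T} := (t * s)%g.

Lemma comp_permE (T : finType) (s t : {perm T}) z : comp_perm s t z = s (t z).
Proof. by rewrite /comp_perm permM. Qed.

(* Main.v *)
Require Import Defs.
From mathcomp Require Import all_boot all_fingroup all_algebra.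
From mathcomp Require Import zify.
Set Implicit Arguments. Unset Strict Implicit. Unset Printing Implicit Defensive.

Section Aux.
Local Open Scope group_scope.

Lemma odd_morph (A B : finType) (phi : {perm A} -> {perm B}) (k : bool) :
  phi 1 = 1 -> (forall s t, phi (s * t) = phi s * phi t) ->
  (forall x y, odd_perm (phi (tperm x y)) = k && (x != y)) ->
  forall s, odd_perm (phi s) = k && odd_perm s.
Proof.
move=> h1 hM hT s; case: (prod_tpermP s) => ts -> _.
elim: ts => [|t ts IH]; first by rewrite !big_nil h1 !odd_perm1 andbF.
by rewrite !big_cons hM !odd_permM IH hT odd_tperm; case: (k).

Qed.

Variable m : nat.
Notation T := ('I_m * 'I_2)%type.

Lemma I2 (b : 'I_2) : b = ord0 \/ b = ord_max.
Proof. by case: b => [[|[|n]] hb]; [left|right|]; try apply/val_inj. Qed.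

Lemma odd_cyc (s : {perm T}) : odd (cyc s) = odd_perm s.
Proof. by rewrite /cyc /odd_perm card_prod !card_ord oddM andbF. Qed.

Lemma liftp_inj (s : {perm 'I_m}) : injective (fun z : T => (s z.1, z.2)).
Proof. by move=> [a b] [c d] /= [/perm_inj -> ->]. Qed.
Definition liftp (s : {perm 'I_m}) : {perm T} := perm (@liftp_inj s).
Lemma liftpE (s : {perm 'I_m}) z : liftp s z = (s z.1, z.2).
Proof. by rewrite permE. Qed.

Lemma odd_liftp (s : {perm 'I_m}) : odd_perm (liftp s) = false.
Proof.
rewrite (@odd_morph _ _ liftp false) //.
- by apply/permP => -[a b]; rewrite liftpE !perm1.
- by move=> s1 s2; apply/permP => z; rewrite permM !liftpE permM.
move=> x y.
have -> : liftp (tperm x y) = tperm (x, ord0) (y, ord0) * tperm (x, ord_max) (y, ord_max).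
{ apply/permP => [[a b]]; rewrite permM liftpE /= !permE /=.
  have h01 : (ord0 == ord_max :> 'I_2) = false by [].
  have h10 : (ord_max == ord0 :> 'I_2) = false by [].
  have [->|->] := I2 b; rewrite !xpair_eqE ?eqxx ?h01 ?h10 ?andbT ?andbF /=.
  all: case: (a =P x) => [?|nx]; case: (a =P y) => [?|ny]; subst => //=; rewrite !xpair_eqE ?eqxx ?h01 ?h10 ?andbT ?andbF //=.
  all: repeat match goal with
    | H : ?u <> ?v |- _ => rewrite (introF eqP H) /=
    | H : ?u <> ?v |- _ => rewrite (introF eqP (nesym H)) /=
    end.
  all: rewrite ?xpair_eqE ?eqxx ?h01 ?h10 ?andbT ?andbF //=.
  }
by rewrite odd_permM !odd_tperm !xpair_eqE !eqxx !andbT addbb.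
Qed.

Lemma embp_inj (a : 'I_m) (g : {perm 'I_2}) :
  injective (fun z : T => if z.1 == a then (z.1, g z.2) else z).
Proof.
move=> [x1 y1] [x2 y2] /=.
case: (x1 =P a) => [->|n1]; case: (x2 =P a) => [->|n2] //=.
- by case=> /perm_inj ->.
- by case=> ?; subst.
- by case=> ?; subst.
Qed.
Definition embp (a : 'I_m) (g : {perm 'I_2}) : {perm T} := perm (@embp_inj a g).
Lemma embpE a g z : embp a g z = if z.1 == a then (z.1, g z.2) else z.
Proof. by rewrite permE. Qed.

Lemma odd_embp a g : odd_perm (embp a g) = odd_perm g.
Proof.
rewrite (@odd_morph _ _ (embp a) true) //.
- by apply/permP => -[x y]; rewrite embpE !perm1; case: ifP.
- move=> s1 s2; apply/permP => -[x y]; rewrite permM !embpE permM /=.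
  case: (x =P a) => [->|nx] /=; rewrite ?eqxx /= ?embpE /= ?eqxx //.
  by rewrite (introF eqP nx).
move=> x y.
have -> : embp a (tperm x y) = tperm (a, x) (a, y).
{ apply/permP => [[b c]]; rewrite embpE /= !permE /= !xpair_eqE.
  case: (b =P a) => [?|nb]; subst; rewrite ?eqxx /= ?andFb.
  all: by repeat case: ifP. }
by rewrite odd_tperm xpair_eqE eqxx.
Qed.

Lemma fibn_inj (f : 'I_m -> {perm 'I_2}) (n : nat) :
  injective (fun z : T => if z.1 < n then (z.1, f z.1 z.2) else z).
Proof.
move=> [x1 y1] [x2 y2] /=.
case: ifP => h1; case: ifP => h2 //=.
- by case=> ?; subst => /perm_inj ->.
- by case=> ?; subst; rewrite h1 in h2.
- by case=> ?; subst; rewrite h1 in h2.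
Qed.
Definition fibn f n : {perm T} := perm (@fibn_inj f n).
Lemma fibnE f n z : fibn f n z = if z.1 < n then (z.1, f z.1 z.2) else z.
Proof. by rewrite permE. Qed.

Lemma odd_fibn f n : n <= m ->
  odd_perm (fibn f n) = \big[addb/false]_(a < m | a < n) odd_perm (f a).
Proof.
elim: n => [_|n IH hn].
  have -> : fibn f 0 = 1 by apply/permP => z; rewrite fibnE perm1.
  by rewrite odd_perm1 big_pred0.
have -> : fibn f n.+1 = fibn f n * embp (Ordinal hn) (f (Ordinal hn)).
  apply/permP => -[x y]; rewrite permM !fibnE embpE /= ltnS.
  case: (ltngtP x n) => [hx|hx|hx] /=.
  - by rewrite -val_eqE /= ltn_eqF.
  - by rewrite -val_eqE /= gtn_eqF.
  - have -> : x = Ordinal hn by apply/val_inj.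
    by rewrite eqxx.
rewrite odd_permM IH ?(ltnW hn) // odd_embp.
rewrite [in RHS](bigD1 (Ordinal hn)) //= addbC; congr (_ (+) _).
apply: eq_bigl => a; rewrite ltnS -val_eqE /=.
by case: (ltngtP a n).
Qed.


Lemma dvdS n : 0 < m -> (m %| n.+1) = (n %% m == m.-1).
Proof.
move=> hm; rewrite /dvdn -addn1 -modnDml addn1.
have := ltn_pmod n hm; move: (n %% m) => r hr.
case: (ltngtP r.+1 m) => [h|h|h].
- by rewrite modn_small //; apply/eqP/eqP; lia.
- lia.
- by rewrite h modnn; apply/eqP/eqP; lia.
Qed.

Lemma odd_expg (s : {perm T}) j : odd_perm (s ^+ j) = odd j && odd_perm s.
Proof.
elim: j => [|j IH]; first by rewrite expg0 odd_perm1.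
by rewrite expgS odd_permM IH /=; case: (odd j); case: (odd_perm s).
Qed.

Lemma odd_sigma (pi : {perm 'I_m}) (pix : 'I_m -> {perm 'I_2}) (sigma : {perm T})
  (hsigma : forall (x : 'I_m) (y : 'I_2), sigma (x, y) = (pi x, pix x y)) :
  odd_perm sigma = \big[addb/false]_(a < m) odd_perm (pix a).
Proof.
have -> : sigma = fibn pix m * liftp pi.
  by apply/permP => -[x y]; rewrite permM fibnE liftpE /= ltn_ord hsigma.
rewrite odd_permM odd_fibn // odd_liftp addbF.
by apply: eq_bigl => a; rewrite ltn_ord.
Qed.

Lemma odd_c (hm : 0 < m) (c : {perm T})
  (hc : forall (x : 'I_m) (y : 'I_2),
          c (x, y) = (ordS x, if nat_of_ord x == m.-1 then ordS y else y)) :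
  odd_perm c = true.
Proof.
have hm1 : m.-1 < m by rewrite ltn_predL.
have -> : c = embp (Ordinal hm1) (tperm ord0 ord_max) * liftp (perm (@ordS_inj m)).
  apply/permP => -[x y]; rewrite permM embpE liftpE hc /=.
  rewrite -val_eqE /=; case: (_ == _) => /=; rewrite permE //.
  congr (_, _); have [->|->] := I2 y; apply/val_inj; rewrite /= permE //.
rewrite odd_permM odd_liftp odd_embp odd_tperm addbF.
by [].
Qed.

Lemma cX (hm : 0 < m) (c : {perm T})
  (hc : forall (x : 'I_m) (y : 'I_2),
          c (x, y) = (ordS x, if nat_of_ord x == m.-1 then ordS y else y)) j x y :
  val ((c ^+ j) (x, y)).1 = (x + j) %% m /\
  val ((c ^+ j) (x, y)).2 = (y + (x + j) %/ m) %% 2.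
Proof.
elim: j => [|j [IH1 IH2]].
  rewrite expg0 perm1 /= addn0 modn_small // divn_small // addn0 modn_small //.
rewrite expgSr permM; move: IH1 IH2; case: ((c ^+ j) (x, y)) => x' y' /= IH1 IH2.
rewrite hc /= IH1; split.
  by rewrite -addn1 modnDml addn1 addnS.
rewrite addnS divnS // dvdS //; case: eqP => h /=.
  rewrite IH2; move: ((x + j) %/ m) => q; lia.
by rewrite IH2 add0n.
Qed.


Lemma porbit_sub (s : {perm T}) (S : {set T}) z :
  (forall w, w \in S -> s w \in S) -> z \in S -> porbit s z \subset S.
Proof.
move=> hS hz; apply/subsetP => w /porbitP [i ->]; rewrite permX.
by elim: i => //= i IH; apply: hS.
Qed.

Lemma porbit_neq (s : {perm T}) (S : {set T}) a b :
  porbit s a \subset S -> b \notin S -> porbit s a != porbit s b.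
Proof.
move=> hs hb; apply/eqP => e.
have : b \in porbit s a by rewrite e porbit_id.
by move/(subsetP hs); rewrite (negbTE hb).
Qed.

Lemma porbit_fix (s : {perm T}) z : s z = z -> porbit s z \subset [set z].
Proof. by move=> hz; apply: porbit_sub; rewrite ?set11 // => w /set1P ->; rewrite hz set11. Qed.

Lemma porbit_fib (s : {perm T}) x y : (forall y, (s (x, y)).1 = x) ->
  porbit s (x, y) \subset [set z : T | z.1 == x].
Proof.
move=> hx; apply: porbit_sub; rewrite ?inE //= => -[a b]; rewrite inE /= => /eqP ->.
by rewrite inE hx.
Qed.

Lemma count_list (s : {perm T}) (L : seq {set T}) :
  uniq L -> {subset L <= porbits s} -> size L <= cyc s.
Proof.
move=> hu hs; rewrite -(card_uniqP hu) /cyc; apply: subset_leq_card.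
by apply/subsetP => O; apply: hs.
Qed.

Lemma count3 (s : {perm T}) x1 x3 :
  s (x1, ord0) = (x1, ord0) -> s (x1, ord_max) = (x1, ord_max) -> x3 != x1 ->
  3 <= cyc s.
Proof.
move=> h0 h1 h3.
apply: (@count_list s [:: porbit s (x1, ord0); porbit s (x1, ord_max); porbit s (x3, ord0)]).
  rewrite /= !inE !negb_or andbT -!andbA; apply/and3P; split.
  - apply: (porbit_neq (porbit_fix h0)); by rewrite inE xpair_eqE eqxx.
  - apply: (porbit_neq (porbit_fix h0)); by rewrite inE xpair_eqE negb_and h3.
  - apply: (porbit_neq (porbit_fix h1)); by rewrite inE xpair_eqE negb_and h3.
by move=> O; rewrite !inE => /or3P [] /eqP ->; apply: imset_f.
Qed.

Lemma count4 (s : {perm T}) x1 x2 x3 :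
  s (x1, ord0) = (x1, ord0) -> s (x1, ord_max) = (x1, ord_max) ->
  (forall y, (s (x2, y)).1 = x2) -> x2 != x1 -> x3 != x1 -> x3 != x2 ->
  4 <= cyc s.
Proof.
move=> h0 h1 hf h2 h3 h32.
apply: (@count_list s [:: porbit s (x1, ord0); porbit s (x1, ord_max);
                          porbit s (x2, ord0); porbit s (x3, ord0)]).
  rewrite /= !inE !negb_or andbT -!andbA.
  apply/and5P; split; last apply/andP; last split.
  - apply: (porbit_neq (porbit_fix h0)); by rewrite inE xpair_eqE eqxx.
  - apply: (porbit_neq (porbit_fix h0)); by rewrite inE xpair_eqE negb_and h2.
  - apply: (porbit_neq (porbit_fix h0)); by rewrite inE xpair_eqE negb_and h3.
  - apply: (porbit_neq (porbit_fix h1)); by rewrite inE xpair_eqE negb_and h2.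
  - apply: (porbit_neq (porbit_fix h1)); by rewrite inE xpair_eqE negb_and h3.
  - apply: (porbit_neq (porbit_fib ord0 hf)); by rewrite inE /= h32.
by move=> O; rewrite !inE => /or4P [] /eqP ->; apply: imset_f.
Qed.

End Aux.

Lemma perm2 (g : {perm 'I_2}) (y : 'I_2) : val (g y) = (y + odd_perm g) %% 2.
Proof.
have ne : (ord0 : 'I_2) <> ord_max by [].
have [h|h] := I2 (g ord0).
- have h' : g ord_max = ord_max.
    have [h'|//] := I2 (g ord_max).
    by have := perm_inj (etrans h' (esym h)).
  have -> : g = 1%g by apply/permP => z; have [->|->] := I2 z; rewrite perm1.
  by rewrite odd_perm1 perm1 addn0 modn_small // ltn_ord.
- have h' : g ord_max = ord0.
    have [//|h'] := I2 (g ord_max).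
    by have := perm_inj (etrans h' (esym h)).
  have -> : g = tperm ord0 ord_max.
    by apply/permP => z; have [->|->] := I2 z; rewrite ?tpermL ?tpermR.
  rewrite odd_tperm.
  by have [->|->] := I2 y; rewrite ?tpermL ?tpermR.
Qed.

Lemma par0 (b : nat) (p : bool) : (0 + b + (odd b (+) p) + p) %% 2 = 0.
Proof. by rewrite modn2 !oddD !oddb; case: (odd b); case: p. Qed.
Lemma par1 (b : nat) (p : bool) : (1 + b + (odd b (+) p) + p) %% 2 = 1.
Proof. by rewrite modn2 !oddD !oddb; case: (odd b); case: p. Qed.

Lemma gauss n : (\sum_(k < n) (k : nat)) * 2 = n * n.-1.
Proof.
elim: n => [|n IH]; first by rewrite big_ord0.
rewrite big_ord_recr /= mulnDl IH; case: n {IH} => //= n; lia.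
Qed.

Lemma iter_addb n c : iter n (addb c) false = odd n && c.
Proof. by elim: n => //= n ->; case: c; case: (odd n). Qed.

Theorem propositionB3 (m : nat) (hm : 3 <= m)
  (pi : {perm 'I_m}) (pix : 'I_m -> {perm 'I_2})
  (sigma c : {perm 'I_m * 'I_2})
  (hsigma : forall (x : 'I_m) (y : 'I_2), sigma (x, y) = (pi x, pix x y))
  (hc : forall (x : 'I_m) (y : 'I_2),
          c (x, y) = (ordS x, if nat_of_ord x == m.-1 then ordS y else y)) :
  exists k : int, 4 <= cyc (comp_perm sigma (perm_zpow c k)).
Proof.
have hm0 : 0 < m by lia.
set Psum := \big[addb/false]_(a < m) odd_perm (pix a).
have oddtau : forall j, odd (cyc (comp_perm sigma (c ^+ j)%g)) = odd j (+) Psum.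
  move=> j; rewrite odd_cyc /comp_perm odd_permM odd_expg (odd_c hm0 hc) andbT.
  by rewrite (odd_sigma hsigma).
have FL : forall (k : nat) (u : 'I_m) (t : bool) (y : 'I_2), (pi u + k) %% m = u ->
   (comp_perm sigma (c ^+ (k + m * t))%g (pi u, y)).1 = pi u /\
   val (comp_perm sigma (c ^+ (k + m * t))%g (pi u, y)).2
     = (y + (pi u + k) %/ m + t + odd_perm (pix u)) %% 2.
  move=> k u t y hu; rewrite comp_permE.
  have [h1 h2] := cX hm0 hc (k + m * t) (pi u) y.
  move: h1 h2; case: ((c ^+ (k + m * t))%g (pi u, y)) => a b /= h1 h2.
  have ha : a = u.
    by apply/val_inj; rewrite /= h1 addnA -modnDmr (mulnC m) modnMl addn0.
  subst a; rewrite hsigma /=; split => //.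
  rewrite perm2 h2 (addnA (pi u)) (addnC _ (m * t)) (mulnC m) divnMDl //.
  by rewrite modnDml; congr (_ %% 2); rewrite !addnA; congr (_ + _); rewrite -!addnA; congr (_ + _); rewrite addnC.
pose D (u : 'I_m) := (u + m - pi u) %% m.
have hD : forall u, (pi u + D u) %% m = u.
  move=> u; rewrite /D modnDmr.
  have -> : pi u + (u + m - pi u) = u + m by have := ltn_ord (pi u); lia.
  by rewrite modnDr modn_small.
have ex3 : forall x1 x2 : 'I_m, exists x3 : 'I_m, (x3 != x1) && (x3 != x2).
  move=> x1 x2.
  have h0 : 0 < m by lia.
  have h1 : 1 < m by lia.
  have h2 : 2 < m by lia.
  case: (boolP ((Ordinal h0 != x1) && (Ordinal h0 != x2))) => [H|H]; first by exists (Ordinal h0).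
  case: (boolP ((Ordinal h1 != x1) && (Ordinal h1 != x2))) => [H'|H']; first by exists (Ordinal h1).
  exists (Ordinal h2); move: H H'; rewrite -!val_eqE /=.
  move: (val x1) (val x2) => a b; lia.
case: (boolP [exists u1, exists u2, (u1 != u2) && (D u1 == D u2)]).
  move/existsP => [u1 /existsP [u2 /andP [hne /eqP hD12]]].
  set k := D u1.
  have hu1 := hD u1.
  have hu2 : (pi u2 + k) %% m = u2 by rewrite /k hD12 hD.
  set t := odd ((pi u1 + k) %/ m) (+) odd_perm (pix u1).
  have [x3 /andP [n1 n2]] := ex3 (pi u1) (pi u2).
  exists (Posz (k + m * t)); rewrite /perm_zpow.
  apply: (@count4 _ _ (pi u1) (pi u2) x3) => //.
  - have [e1 e2] := FL k u1 t ord0 hu1.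
    rewrite [LHS]surjective_pairing e1; congr (_, _); apply/val_inj.
    by rewrite e2 par0.
  - have [e1 e2] := FL k u1 t ord_max hu1.
    rewrite [LHS]surjective_pairing e1; congr (_, _); apply/val_inj.
    by rewrite e2 par1.
  - by move=> y; have [] := FL k u2 t y hu2.
  - by rewrite (inj_eq perm_inj) eq_sym.
move=> hno.
have hDlt : forall u, D u < m by move=> u; apply: ltn_pmod.
pose Dord (u : 'I_m) : 'I_m := Ordinal (hDlt u).
have Dinj : injective Dord.
  move=> u1 u2 /(congr1 val) /= e; apply/eqP; apply/negPn/negP => ne.
  move/negP: hno; apply; apply/existsP; exists u1; apply/existsP; exists u2.
  by rewrite ne e eqxx.
pose g := invF Dinj.
have hg : forall k : 'I_m, D (g k) = k.
  by move=> k; have := congr1 val (f_invF Dinj k).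
have ginj : injective g := can_inj (f_invF Dinj).
have hu : forall k : 'I_m, (pi (g k) + k) %% m = g k.
  by move=> k; have := hD (g k); rewrite hg.
pose b (k : 'I_m) := (pi (g k) + k) %/ m.
pose t (k : 'I_m) := odd (b k) (+) odd_perm (pix (g k)).
pose jj (k : 'I_m) := k + m * t k.
case: (boolP [exists k : 'I_m, 4 <= cyc (comp_perm sigma (c ^+ jj k)%g)]).
  by move/existsP => [k hk]; exists (Posz (jj k)).
move/existsPn => hall; exfalso.
have hodd : forall k : 'I_m, odd (jj k) = ~~ Psum.
  move=> k.
  have [x3 /andP [n1 _]] := ex3 (pi (g k)) (pi (g k)).
  have [e1 e2] := FL k (g k) (t k) ord0 (hu k).
  have [f1 f2] := FL k (g k) (t k) ord_max (hu k).
  have h3 : 3 <= cyc (comp_perm sigma (c ^+ jj k)%g).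
    apply: (@count3 _ _ (pi (g k)) x3) => //.
    - rewrite [LHS]surjective_pairing e1; congr (_, _); apply/val_inj.
      by rewrite e2 par0.
    - rewrite [LHS]surjective_pairing f1; congr (_, _); apply/val_inj.
      by rewrite f2 par1.
  have h4 := hall k.
  have e : cyc (comp_perm sigma (c ^+ jj k)%g) = 3 by lia.
  have := oddtau (jj k); rewrite e /=.
  by case: (odd (jj k)); case: (Psum).
have hS : \sum_(k < m) (pi (g k) + k) = \sum_(k < m) (g k : nat) + m * \sum_(k < m) b k.
  rewrite big_distrr -big_split; apply: eq_bigr => k _.
  by rewrite {1}(divn_eq (pi (g k) + k) m) (hu k) mulnC addnC.
have e1 : \sum_(k < m) (pi (g k) : nat) = \sum_(k < m) (k : nat).
  have hi : injective (fun k => pi (g k)) by move=> x y /perm_inj /ginj.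
  by rewrite [RHS](reindex_inj hi).
have e2 : \sum_(k < m) (g k : nat) = \sum_(k < m) (k : nat).
  by rewrite [RHS](reindex_inj ginj).
rewrite big_split /= e1 e2 in hS.
move: hS; set S := \sum_(k < m) (k : nat); set B := \sum_(k < m) b k => hS.
have hSB : S = m * B by lia.
have gs := gauss m; rewrite -/S hSB -mulnA in gs.
have hB : B * 2 = m.-1 by apply/eqP; rewrite -(eqn_pmul2l hm0) gs.
have modd : odd m.
  have -> : m = (B * 2).+1 by lia.
  by rewrite /= oddM andbF.
have X1 : \big[addb/false]_(k < m) odd (jj k) = ~~ Psum.
  by rewrite (eq_bigr (fun _ => ~~ Psum)) // big_const_ord iter_addb modd.
have X2 : \big[addb/false]_(k < m) odd (jj k) = odd S (+) (odd B (+) Psum).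
  rewrite (eq_bigr (fun k : 'I_m => odd k (+) (odd (b k) (+) odd_perm (pix (g k))))); last first.
    by move=> k _; rewrite /jj oddD oddM modd oddb.
  rewrite big_split /= big_split /=.
  rewrite /S /B !(big_morph odd oddD (erefl : odd 0 = false)).
  congr (_ (+) (_ (+) _)).
  by rewrite /Psum [RHS](reindex_inj ginj).
move: X2; rewrite X1 hSB oddM modd /=.
by case: (odd B); case: (Psum).
Qed.
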